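(* Let $S\subseteq\mathbb{R}^n\times\mathbb{R}^p$ be sign-invariant with respect to $x$, and let $S_0=S\cap(\mathbb{R}^n_+\times\mathbb{R}^p)$. Then $$\mathrm{conv}(S)=\{(x,z)\mid \exists u\in\mathbb{R}^n:\ (u,z)\in\mathrm{conv}(S_0),\ u\ge|x|\},$$ where $|x|$ is the componentwise absolute value and $u\ge|x|$ is componentwise.
   Context: A set $S\subseteq\mathbb{R}^n\times\mathbb{R}^p$ is sign-invariant with respect to $x$ if $(x,z)\in S$ implies $(\bar x,z)\in S$ for every $\bar x\in\mathbb{R}^n$ with $|\bar x|=|x|$ (componentwise absolute values). *)

(* Defs.v *)
From HB Require Import structures.
From mathcomp Require Import all_boot all_order all_algebra.
Set Implicit Arguments. Unset Strict Implicit. Unset Printing Implicit Defensive.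
Import Order.TTheory GRing.Theory Num.Theory.
Local Open Scope ring_scope.

Definition conv (R : realFieldType) (V : lmodType R) (S : V -> Prop) (v : V) : Prop :=
  exists (k : nat) (w : 'I_k -> R) (s : 'I_k -> V),
    (forall i, 0 <= w i) /\ \sum_(i < k) w i = 1 /\ (forall i, S (s i)) /\
    v = \sum_(i < k) w i *: s i.

Definition sign_invariant (R : realFieldType) (n p : nat)
    (S : 'rV[R]_n * 'rV[R]_p -> Prop) : Prop :=
  forall (x xb : 'rV[R]_n) (z : 'rV[R]_p),
    S (x, z) -> (forall i, `|xb 0 i| = `|x 0 i|) -> S (xb, z).

Definition nonneg_part (R : realFieldType) (n p : nat)
    (S : 'rV[R]_n * 'rV[R]_p -> Prop) (y : 'rV[R]_n * 'rV[R]_p) : Prop :=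
  S y /\ forall i, 0 <= y.1 0 i.

(* Main.v *)
Require Import Defs.
From HB Require Import structures.
From mathcomp Require Import all_boot all_order all_algebra.
From mathcomp Require Import ring lra.
Import Order.TTheory GRing.Theory Num.Theory.
Local Open Scope ring_scope.
Set Implicit Arguments. Unset Strict Implicit.

Lemma sum_pair (R : realFieldType) n p k (w : 'I_k -> R) (s : 'I_k -> 'rV[R]_n * 'rV[R]_p) :
  \sum_(i < k) w i *: s i = (\sum_(i < k) w i *: (s i).1, \sum_(i < k) w i *: (s i).2).
Proof.
elim: k w s => [|k IH] w s; first by rewrite !big_ord0.
by rewrite !big_ord_recr /= IH.
Qed.

Lemma conv_convex (R : realFieldType) (V : lmodType R) (S : V -> Prop) a b l :
  conv S a -> conv S b -> 0 <= l -> l <= 1 -> conv S (l *: a + (1 - l) *: b).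
Proof.
move=> [k [w [s [w0 [w1 [sS ->]]]]]] [k' [w' [s' [w0' [w1' [sS' ->]]]]]] l0 l1.
exists (k + k')%N.
exists (fun i => match split i with inl a => l * w a | inr b => (1 - l) * w' b end).
exists (fun i => match split i with inl a => s a | inr b => s' b end).
split; [|split; [|split]].
- move=> i; case: (split i) => c; apply: mulr_ge0 => //; by rewrite subr_ge0.
- rewrite big_split_ord /=.
  under eq_bigr do rewrite (unsplitK (inl _)).
  under [X in _ + X = _]eq_bigr do rewrite (unsplitK (inr _)).
  by rewrite -!mulr_sumr w1 w1' !mulr1 addrC subrK.
- by move=> i; case: (split i).
- rewrite big_split_ord /=.
  under [X in _ = X + _]eq_bigr do rewrite (unsplitK (inl _)).
  under [X in _ = _ + X]eq_bigr do rewrite (unsplitK (inr _)).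
  by rewrite !scaler_sumr; congr (_ + _); apply: eq_bigr => i _; rewrite scalerA.
Qed.

Definition flipv (R : realFieldType) n (j : 'I_n) (y : 'rV[R]_n) : 'rV[R]_n :=
  \row_i (if i == j then - y 0 i else y 0 i).
Definition setv (R : realFieldType) n (j : 'I_n) (a : R) (y : 'rV[R]_n) : 'rV[R]_n :=
  \row_i (if i == j then a else y 0 i).

Lemma conv_flip (R : realFieldType) n p (S : 'rV[R]_n * 'rV[R]_p -> Prop) (j : 'I_n) (y : 'rV[R]_n) (z : 'rV[R]_p) :
  sign_invariant S -> conv S (y, z) -> conv S (flipv j y, z).
Proof.
move=> SI [k [w [s [w0 [w1 [sS H]]]]]].
exists k, w, (fun i => (flipv j (s i).1, (s i).2)); split; [done|split; [done|split]].
- move=> i; apply: (SI (s i).1); first by case: (s i) (sS i).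
  by move=> l; rewrite mxE; case: ifP => _ //; rewrite normrN.
- rewrite sum_pair /=; rewrite sum_pair in H; case: H => Hy Hz.
  congr pair => //; apply/rowP => i; rewrite Hy !mxE !summxE.
  case: ifP => e; [rewrite -sumrN|]; apply: eq_bigr => l _; rewrite !mxE e ?mulrN //.
Qed.

Lemma conv_step (R : realFieldType) n p (S : 'rV[R]_n * 'rV[R]_p -> Prop) (j : 'I_n) (a : R) (y : 'rV[R]_n) (z : 'rV[R]_p) :
  sign_invariant S -> conv S (y, z) -> `|a| <= y 0 j -> conv S (setv j a y, z).
Proof.
move=> SI H ha.
have a1 : a <= `|a| := ler_norm a.
have a2 : - a <= `|a| by rewrite -normrN ler_norm.
have [y0|ny0] := eqVneq (y 0 j) 0.
  have a0 : a = 0 by apply/eqP; rewrite -normr_le0 -y0.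
  suff -> : setv j a y = y by [].
  by apply/rowP => i; rewrite mxE; case: eqP => [->|//]; rewrite a0 y0.
have yp : 0 < y 0 j by rewrite lt_neqAle eq_sym ny0 (le_trans (normr_ge0 a)).
set l := (y 0 j + a) / (2 * y 0 j).
have l0 : 0 <= l by apply: divr_ge0; lra.
have l1 : l <= 1 by rewrite ler_pdivrMr; lra.
have := conv_convex H (conv_flip j SI H) l0 l1.
suff -> : l *: (y, z) + (1 - l) *: (flipv j y, z) = (setv j a y, z) by [].
have -> : l *: (y, z) + (1 - l) *: (flipv j y, z) = (l *: y + (1 - l) *: flipv j y, l *: z + (1 - l) *: z) by [].
congr pair.
- apply/rowP => i; rewrite !mxE; case: eqP => [->|_].
    rewrite /l; field; lra.
  by rewrite -mulrDl addrC subrK mul1r.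
- by rewrite -scalerDl addrC subrK scale1r.
Qed.

Lemma conv_mono (R : realFieldType) (V : lmodType R) (S T : V -> Prop) v :
  (forall x, S x -> T x) -> conv S v -> conv T v.
Proof.
move=> ST [k [w [s [? [? [sS ?]]]]]]; exists k, w, s; do !split => //.
by move=> i; apply: ST.
Qed.

Theorem theorem3 (R : realFieldType) (n p : nat)
    (S : 'rV[R]_n * 'rV[R]_p -> Prop) :
  sign_invariant S ->
  forall (x : 'rV[R]_n) (z : 'rV[R]_p),
    conv S (x, z) <->
    exists u : 'rV[R]_n, conv (nonneg_part S) (u, z) /\ (forall i, `|x 0 i| <= u 0 i).
Proof.
move=> SI x z; split.
- move=> [k [w [s [w0 [w1 [sS H]]]]]].
  rewrite sum_pair in H; case: H => Hx Hz.
  pose s' i := (\row_j `|(s i).1 0 j|, (s i).2).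
  exists (\sum_(i < k) w i *: (s' i).1); split.
    exists k, w, s'; split; [done|split; [done|split]].
    + move=> i; split; last by move=> l; rewrite /= mxE normr_ge0.
      apply: (SI (s i).1); first by case: (s i) (sS i).
      by move=> l; rewrite mxE normr_id.
    + by rewrite sum_pair Hz.
  move=> i; rewrite Hx !summxE.
  apply: (le_trans (ler_norm_sum _ _ _)); apply: ler_sum => l _.
  by rewrite !mxE normrM ger0_norm.
- move=> [u [Hu Hxu]].
  have Cu : conv S (u, z) by apply: conv_mono Hu => y [].
  pose ym m := \row_(i < n) (if (i < m)%N then x 0 i else u 0 i).
  suff Hm : forall m, conv S (ym m, z).
    have := Hm n; suff -> : ym n = x by [].
    by apply/rowP => i; rewrite mxE ltn_ord.
  elim => [|m IH].
    by suff -> : ym 0%N = u by []; apply/rowP => i; rewrite mxE.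
  have [mn|nm] := ltnP m n; last first.
    suff -> : ym m.+1 = ym m by [].
    apply/rowP => i; rewrite !mxE.
    by rewrite (leq_trans (ltn_ord i) nm) (leq_trans (ltn_ord i) (leqW nm)).
  pose j := Ordinal mn.
  have E : ym m 0 j = u 0 j by rewrite mxE ltnn.
  have := @conv_step R n p S j (x 0 j) (ym m) z SI IH; rewrite E => /(_ (Hxu j)).
  suff -> : setv j (x 0 j) (ym m) = ym m.+1 by [].
  apply/rowP => i; rewrite !mxE.
  case: eqP => [->|ne]; first by rewrite /= leqnn.
  rewrite [in RHS]ltnS [in RHS]leq_eqVlt.
  by have -> : (val i == m) = false by apply/eqP => e; apply: ne; apply: val_inj.
Qed.
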